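(* Let $(X,\kappa)$ be a digital image and let $m$ be a positive integer. Then $(X,\kappa)$ has both the digital fixed point property with respect to $[0,m]_{\mathbb{Z}}$ and the digital homotopy fixed point property if and only if $X$ is a singleton.
   Context: A digital image is a pair $(X,\kappa)$ with $X \subset \mathbb{Z}^n$ and $\kappa$ an adjacency relation on $X$. For integers $a<b$, $[a,b]_{\mathbb{Z}} = \{z \in \mathbb{Z} : a \le z \le b\}$ with $2$-adjacency (consecutive integers adjacent). A function $f:(X,\kappa)\to(Y,\lambda)$ is $(\kappa,\lambda)$-continuous if whenever $x \leftrightarrow_\kappa x'$ we have $f(x)=f(x')$ or $f(x)\leftrightarrow_\lambda f(x')$. A $\kappa$-path is a $(2,\kappa)$-continuous function $p:[0,m]_{\mathbb{Z}} \to X$. The normal product adjacency $\kappa_*$ on $X \times [0,m]_{\mathbb{Z}}$: $(x,s) \leftrightarrow_{\kappa_*} (x',s')$ iff ($x \leftrightarrow_\kappa x'$ and $s=s'$) or ($x=x'$ and $|s-s'|=1$) or ($x \leftrightarrow_\kappa x'$ and $|s-s'|=1$). For $f: X \times [0,m]_{\mathbb{Z}} \to X$ and $t \in [0,m]_{\mathbb{Z}}$, $f_t: X\to X$ is $f_t(x)=f(x,t)$. $(X,\kappa)$ has the digital fixed point property with respect to $[0,m]_{\mathbb{Z}}$ if for every $(\kappa_*,\kappa)$-continuous $f: X \times [0,m]_{\mathbb{Z}} \to X$ there is a $\kappa$-path $p:[0,m]_{\mathbb{Z}} \to X$ with $f_t(p(t)) = p(t)$ for all $t$. A digital homotopy is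 a function $F: X \times [0,m]_{\mathbb{Z}} \to X$ ($m \in \mathbb{N}$) such that each $F_t$ is $(\kappa,\kappa)$-continuous and each $t \mapsto F(x,t)$ is $(2,\kappa)$-continuous. $(X,\kappa)$ has the digital homotopy fixed point property if for every digital homotopy $F: X \times [0,m]_{\mathbb{Z}} \to X$ (any $m$) there is a $\kappa$-path $p:[0,m]_{\mathbb{Z}}\to X$ with $F_t(p(t))=p(t)$ for all $t \in [0,m]_{\mathbb{Z}}$. *)

(* Defs.v *)
From mathcomp Require Import all_boot all_order all_algebra.
Set Implicit Arguments. Unset Strict Implicit. Unset Printing Implicit Defensive.

Definition pt (n : nat) := 'rV[int]_n.

Definition adjacency_on (n : nat) (X : pt n -> Prop) (kappa : pt n -> pt n -> Prop) : Prop :=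
  (forall x y, X x -> X y -> kappa x y -> kappa y x) /\
  (forall x, X x -> ~ kappa x x).

Definition eq_or_adj (n : nat) (kappa : pt n -> pt n -> Prop) (a b : pt n) : Prop :=
  a = b \/ kappa a b.

(* A kappa-path p : [0,m]_Z -> X, i.e. a (2,kappa)-continuous map. *)
Definition kpath (n : nat) (X : pt n -> Prop) (kappa : pt n -> pt n -> Prop)
    (m : nat) (p : nat -> pt n) : Prop :=
  (forall t, t <= m -> X (p t)) /\
  (forall t, t < m -> eq_or_adj kappa (p t) (p t.+1)).

Definition maps_into (n : nat) (X : pt n -> Prop) (m : nat) (f : pt n -> nat -> pt n) : Prop :=
  forall x t, X x -> t <= m -> X (f x t).

Definition normal_prod_adj (n : nat) (kappa : pt n -> pt n -> Prop)
    (x : pt n) (s : nat) (x' : pt n) (s' : nat) : Prop :=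
  (kappa x x' /\ s = s') \/
  (x = x' /\ (s = s'.+1 \/ s' = s.+1)) \/
  (kappa x x' /\ (s = s'.+1 \/ s' = s.+1)).

Definition prod_continuous (n : nat) (X : pt n -> Prop) (kappa : pt n -> pt n -> Prop)
    (m : nat) (f : pt n -> nat -> pt n) : Prop :=
  maps_into X m f /\
  forall x s x' s', X x -> X x' -> s <= m -> s' <= m ->
    normal_prod_adj kappa x s x' s' -> eq_or_adj kappa (f x s) (f x' s').

Definition has_fixed_path (n : nat) (X : pt n -> Prop) (kappa : pt n -> pt n -> Prop)
    (m : nat) (f : pt n -> nat -> pt n) : Prop :=
  exists p : nat -> pt n, kpath X kappa m p /\ forall t, t <= m -> f (p t) t = p t.

Definition DFPP_wrt (n : nat) (X : pt n -> Prop) (kappa : pt n -> pt n -> Prop) (m : nat) : Prop :=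
  forall f : pt n -> nat -> pt n, prod_continuous X kappa m f -> has_fixed_path X kappa m f.

Definition digital_homotopy (n : nat) (X : pt n -> Prop) (kappa : pt n -> pt n -> Prop)
    (m : nat) (F : pt n -> nat -> pt n) : Prop :=
  maps_into X m F /\
  (forall t, t <= m -> forall x y, X x -> X y -> kappa x y -> eq_or_adj kappa (F x t) (F y t)) /\
  (forall x, X x -> forall t, t < m -> eq_or_adj kappa (F x t) (F x t.+1)).

Definition DHFPP (n : nat) (X : pt n -> Prop) (kappa : pt n -> pt n -> Prop) : Prop :=
  forall (m : nat), 0 < m -> forall F : pt n -> nat -> pt n,
    digital_homotopy X kappa m F -> has_fixed_path X kappa m F.

Definition is_singleton (n : nat) (X : pt n -> Prop) : Prop :=
  exists x0 : pt n, forall x, X x <-> x = x0.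

(* Main.v *)
Require Import Defs.
From mathcomp Require Import all_boot all_order all_algebra.
From Stdlib Require Import Classical.

Lemma no_fpp (n : nat) (X : pt n -> Prop) (kappa : pt n -> pt n -> Prop)
  (hkappa : adjacency_on X kappa) (m : nat) (x0 x1 : pt n) :
  X x0 -> X x1 -> x1 <> x0 ->
  (kappa x0 x1 \/ ~ (exists y, X y /\ kappa x0 y)) ->
  ~ DFPP_wrt X kappa m.
Proof.
move=> X0 X1 ne hk D.
destruct hkappa as [hsym hirr].
set g := fun x : pt n => if x == x0 then x1 else x0.
have gX : forall x, X (g x) by move=> x; rewrite /g; case: (x == x0).
have gc : forall a b, X a -> X b -> kappa a b -> eq_or_adj kappa (g a) (g b).
  move=> a b Xa Xb kab; rewrite /g /eq_or_adj.
  case: (eqVneq a x0) => [Ea|Na]; case: (eqVneq b x0) => [Eb|Nb].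
  - by left.
  - subst a; destruct hk as [hk|hk]; first by right; apply: hsym.
    by exfalso; apply: hk; exists b.
  - subst b; destruct hk as [hk|hk]; first by right.
    by exfalso; apply: hk; exists a; split => //; apply: hsym.
  - by left.
have PC : prod_continuous X kappa m (fun x _ => g x).
  split; first by move=> x t _ _; apply: gX.
  move=> x s x' s' Xx Xx' _ _ H.
  destruct H as [[H _]|[[H _]|[H _]]]; [exact: gc | subst x'; left; reflexivity | exact: gc].
have [p [[pX _] pf]] := D _ PC.
have := pf 0 (leq0n m); have := pX 0 (leq0n m).
rewrite /g; case: (eqVneq (p 0) x0) => [E|N] _.
- by rewrite E /=; exact: ne.
- by move=> /= E; move: N; rewrite -E eqxx.
Qed.

Theorem mainTheorem3 (n : nat) (X : pt n -> Prop) (kappa : pt n -> pt n -> Prop)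
  (hkappa : adjacency_on X kappa) (m : nat) (hm : 0 < m) :
  (DFPP_wrt X kappa m /\ DHFPP X kappa) <-> is_singleton X.
Proof.
split.
- move=> [D _].
  have PC : prod_continuous X kappa m (fun x _ => x).
    split; first by move=> x t Xx _.
    move=> x s x' s' Xx Xx' _ _ H.
    destruct H as [[H _]|[[H _]|[H _]]]; [right; exact H | subst x'; left; reflexivity | right; exact H].
  have [p [[pX _] _]] := D _ PC.
  set x0 := p 0; have X0 : X x0 by apply: pX.
  apply: NNPP => ns.
  have [x1 [X1 ne]] : exists x1, X x1 /\ x1 <> x0.
    apply: NNPP => H; apply: ns; exists x0 => x; split.
    + by move=> Xx; apply: NNPP => nx; apply: H; exists x.
    + by move=> ->.
  destruct (classic (exists y, X y /\ kappa x0 y)) as [[y [Xy ky]]|ni].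
  + apply: (@no_fpp n X kappa hkappa m x0 y) => //.
    * by move=> E; subst y; exact: (proj2 hkappa x0 X0 ky).
    * by left.
  + exact: (@no_fpp n X kappa hkappa m x0 x1 X0 X1 ne (or_intror ni)).
- move=> [x0 H]; split.
  + move=> f [fX _]; exists (fun _ => x0); split.
    * split; first by move=> t _; apply/H.
      by move=> t _; left.
    * by move=> t tm; apply/H; apply: fX => //; apply/H.
  + move=> m' _ F [fX _]; exists (fun _ => x0); split.
    * split; first by move=> t _; apply/H.
      by move=> t _; left.
    * by move=> t tm; apply/H; apply: fX => //; apply/H.
Qed.
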